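(* Let $R$ be a commutative ring and $\mathfrak a$ an ideal of $R$ such that $R$ is complete with respect to some $\mathfrak a$-filtration of $R$. Let $\mathfrak A=\mathfrak aR[[X]]+XR[[X]]$, let $n\ge0$ and $N\ge1$ be integers, and let $f,g\in R[[X]]$ be $\mathfrak a$-distinguished of order $n$ with $f\equiv g\pmod{\mathfrak A^{(n+1)N}}$. Then $P_f\equiv P_g\pmod{\mathfrak A^{N+1}}$ and $U_f\equiv U_g\pmod{\mathfrak A^N}$. Moreover, for each $i\le(n+1)N$ let $\Pi_i\subseteq R$ be a system of representatives for $R/\mathfrak a^i$, and assume $g=f\bmod\mathfrak A^{(n+1)N}$. Let $t=\tau_n(g)^{-1}\bmod\mathfrak A^{(n+1)N-n}$, set $S_0=1$, and for positive integers $i\le N-1$ define recursively $S_i=\tau_n(t\,\alpha_n(g)\,S_{i-1})\bmod\mathfrak A^{(n+1)N-n(i+1)}$. Then $$U_f^{-1}\equiv t\sum_{i=0}^{N-1}(-1)^iS_i\pmod{\mathfrak A^N}\quad\text{and}\quad P_f\equiv g\,t\sum_{i=0}^{N-1}(-1)^iS_i\pmod{\mathfrak A^N}.$$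
   Context: An $\mathfrak a$-filtration is a descending sequence of ideals each containing a power of $\mathfrak a$; $R$ is complete with respect to it if $R\to\varprojlim R/\mathfrak f_i$ is an isomorphism. $f\in R[[X]]$ is $\mathfrak a$-distinguished of order $n$ if $f_i\in\mathfrak a$ for $i<n$ and $f_n$ is a unit modulo $\mathfrak a$ ($f_i$ the coefficient of $X^i$). For such $f$ there are a unique monic polynomial $P_f\in R[X]$ of degree $n$ with non-leading coefficients in $\mathfrak a$ and a unique unit $U_f\in R[[X]]$ with $f=U_fP_f$. Operators: $\tau_n(f)=\sum_{i\ge0}f_{n+i}X^i$ and $\alpha_n(f)=\sum_{i=0}^{n-1}f_iX^i$. For $r\in R$ and $i\le(n+1)N$, $r\bmod\mathfrak a^i$ is the unique element of $\Pi_i$ congruent to $r$ modulo $\mathfrak a^i$; for $h\in R[[X]]$ and $k\le (n+1)N$, $h\bmod\mathfrak A^k=\sum_{i=0}^{k-1}(h_i\bmod\mathfrak a^{k-i})X^i\in R[X]$, a polynomial congruent to $h$ modulo $\mathfrak A^k$. *)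

(* Defs.v *)
From HB Require Import structures.
From mathcomp Require Import all_boot all_order all_algebra.
From Stdlib Require Import ClassicalEpsilon.
Set Implicit Arguments. Unset Strict Implicit. Unset Printing Implicit Defensive.
Import Order.TTheory GRing.Theory Num.Theory.
Local Open Scope ring_scope.

Section Defs.
Variable R : comPzRingType.

Definition is_ideal (a : R -> Prop) : Prop :=
  [/\ a 0, (forall x y, a x -> a y -> a (x + y)) & (forall r x, a x -> a (r * x))].

(** Power of an ideal in a ring given by its operations:
    I^0 = whole ring, I^(k+1) = I * I^k (finite sums of products). *)
Inductive ipow (T : Type) (zero : T) (add mul : T -> T -> T) (I : T -> Prop)
  : nat -> T -> Prop :=
| ipow_0 x : ipow zero add mul I 0 x
| ipow_zero k : ipow zero add mul I k.+1 zero
| ipow_mul k x y : I x -> ipow zero add mul I k y -> ipow zero add mul I k.+1 (mul x y)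
| ipow_add k u v : ipow zero add mul I k.+1 u -> ipow zero add mul I k.+1 v ->
                   ipow zero add mul I k.+1 (add u v).

Definition rpow (a : R -> Prop) (k : nat) : R -> Prop :=
  ipow 0 +%R *%R a k.

Definition is_filtration (a : R -> Prop) (F : nat -> R -> Prop) : Prop :=
  [/\ forall i, is_ideal (F i),
      forall i x, F i.+1 x -> F i x &
      forall i, exists k, forall x, rpow a k x -> F i x].

(** R -> lim R/F_i is bijective: injective, and every compatible family of
    residue classes (given by representatives x_i with x_j = x_i mod F_i
    for i <= j) comes from an element of R. *)
Definition complete_wrt (F : nat -> R -> Prop) : Prop :=
  (forall r, (forall i, F i r) -> r = 0) /\
  (forall x : nat -> R, (forall i j, (i <= j)%N -> F i (x j - x i)) ->
     exists r, forall i, F i (r - x i)).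

Definition pser := nat -> R.
Definition pzero : pser := fun _ => 0.
Definition pone : pser := fun k => if k == 0%N then 1 else 0.
Definition padd (f g : pser) : pser := fun k => f k + g k.
Definition popp (f : pser) : pser := fun k => - f k.
Definition psub (f g : pser) : pser := padd f (popp g).
Definition pmul (f g : pser) : pser :=
  fun k => \sum_(i < k.+1) f i * g (k - i)%N.

Definition punit (f : pser) : Prop := exists v, pmul f v = pone.
(** the inverse of a unit of R[[X]] (unique since R[[X]] is commutative) *)
Definition pinv (f : pser) : pser := epsilon (inhabits pzero) (fun v => pmul f v = pone).

(** the ideal  aR[[X]] + XR[[X]]  and its powers *)
Definition bigA (a : R -> Prop) : pser -> Prop := fun h => a (h 0%N).
Definition Apow (a : R -> Prop) (k : nat) : pser -> Prop :=
  ipow pzero padd pmul (bigA a) k.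
Definition pcong (a : R -> Prop) (k : nat) (f g : pser) : Prop :=
  Apow a k (psub f g).

Definition distinguished (a : R -> Prop) (n : nat) (f : pser) : Prop :=
  (forall i, (i < n)%N -> a (f i)) /\ exists u, a (f n * u - 1).

Definition weierstrass (a : R -> Prop) (n : nat) (f P U : pser) : Prop :=
  [/\ P n = 1, (forall i, (n < i)%N -> P i = 0), (forall i, (i < n)%N -> a (P i)),
      punit U & f = pmul U P].

Definition tau (n : nat) (f : pser) : pser := fun i => f (n + i)%N.
Definition alpha (n : nat) (f : pser) : pser := fun i => if (i < n)%N then f i else 0.

Definition rep_system (a : R -> Prop) (Pi : R -> Prop) (i : nat) : Prop :=
  forall r, exists p, [/\ Pi p, rpow a i (r - p) &
                        forall q, Pi q -> rpow a i (r - q) -> q = p].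

Definition rmod (a : R -> Prop) (Pi : nat -> R -> Prop) (i : nat) (r : R) : R :=
  epsilon (inhabits 0) (fun p => Pi i p /\ rpow a i (r - p)).

Definition pmodA (a : R -> Prop) (Pi : nat -> R -> Prop) (k : nat) (h : pser) : pser :=
  fun i => if (i < k)%N then rmod a Pi (k - i) (h i) else 0.

Fixpoint Sseq (a : R -> Prop) (Pi : nat -> R -> Prop) (n N : nat) (g t : pser)
  (i : nat) : pser :=
  match i with
  | 0 => pone
  | i'.+1 => pmodA a Pi ((n.+1 * N) - n * i'.+2)
               (tau n (pmul (pmul t (alpha n g)) (Sseq a Pi n N g t i')))
  end.

Definition altsum (N : nat) (S : nat -> pser) : pser :=
  fun k => \sum_(i < N) (-1) ^+ i * S i k.

End Defs.

(* Main.v *)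
Require Import Defs.
From HB Require Import structures.
From mathcomp Require Import all_boot all_order all_algebra.
From mathcomp Require Import boolp.
From mathcomp Require Import zify ring.
From Stdlib Require Import ClassicalEpsilon.
Set Implicit Arguments. Unset Strict Implicit. Unset Printing Implicit Defensive.
Import GRing.Theory.
Local Open Scope ring_scope.

Section PS.
Variable R : comPzRingType.

Definition ps : Type := pser R.
HB.instance Definition _ := gen_eqMixin ps.
HB.instance Definition _ := gen_choiceMixin ps.

Lemma pE (f g : pser R) : (forall k, f k = g k) -> f = g.
Proof. by move=> h; apply: functional_extensionality_dep. Qed.

Fact paddA : associative (@padd R).
Proof. by move=> f g h; apply: pE => k; rewrite /padd addrA. Qed.
Fact paddC : commutative (@padd R).
Proof. by move=> f g; apply: pE => k; rewrite /padd addrC. Qed.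
Fact padd0 : left_id (@pzero R) (@padd R).
Proof. by move=> f; apply: pE => k; rewrite /padd /pzero add0r. Qed.
Fact paddN : left_inverse (@pzero R) (@popp R) (@padd R).
Proof. by move=> f; apply: pE => k; rewrite /padd /popp /pzero addNr. Qed.

HB.instance Definition _ := GRing.isZmodule.Build ps paddA paddC padd0 paddN.

Fact pmul_rev (p q : pser R) i :
  pmul p q i = \sum_(j < i.+1) p (i - j)%N * q j.
Proof.
rewrite /pmul (reindex_inj rev_ord_inj) /=.
by apply: eq_bigr => j _; rewrite (sub_ordK j).
Qed.

Fact pmulA : associative (@pmul R).
Proof.
move=> p q r; apply: pE => i; rewrite {1}/pmul pmul_rev.
pose coef3 j k := p j * (q (i - j - k)%N * r k).
transitivity (\sum_(j < i.+1) \sum_(k < i.+1 | (k <= i - j)%N) coef3 j k).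
  apply: eq_bigr => /= j _; rewrite pmul_rev big_distrr /=.
  by rewrite (big_ord_narrow_leq (leq_subr _ _)).
rewrite (exchange_big_dep predT) //=; apply: eq_bigr => k _.
transitivity (\sum_(j < i.+1 | (j <= i - k)%N) coef3 j k).
  apply: eq_bigl => j; rewrite -ltnS -(ltnS j) -!subSn ?leq_ord //.
  by rewrite -subn_gt0 -(subn_gt0 j) -!subnDA addnC.
rewrite (big_ord_narrow_leq (leq_subr _ _)) /pmul big_distrl /=.
by apply: eq_bigr => j _; rewrite /coef3 -!subnDA addnC mulrA.
Qed.

Fact pmulC : commutative (@pmul R).
Proof.
move=> p q; apply: pE => i; rewrite pmul_rev /pmul.
by apply: eq_bigr => j _; rewrite mulrC.
Qed.

Fact pmul1 : left_id (@pone R) (@pmul R).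
Proof.
move=> p; apply: pE => i; rewrite /pmul big_ord_recl subn0 /pone /=.
by rewrite big1 => [|j _]; rewrite ?mul1r ?addr0 // mul0r.
Qed.

Fact pmulDl : left_distributive (@pmul R) (@padd R).
Proof.
move=> p q r; apply: pE => i; rewrite /pmul /padd -big_split /=.
by apply: eq_bigr => j _; rewrite mulrDl.
Qed.

HB.instance Definition _ := GRing.Zmodule_isComPzRing.Build ps pmulA pmulC pmul1 pmulDl.

Lemma mulE (f g : ps) k : (f * g) k = \sum_(i < k.+1) f i * g (k - i)%N.
Proof. by []. Qed.
Lemma addE (f g : ps) k : (f + g) k = f k + g k.
Proof. by []. Qed.
Lemma oppE (f : ps) k : (- f) k = - f k.
Proof. by []. Qed.
Lemma subE (f g : ps) k : (f - g) k = f k - g k.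
Proof. by []. Qed.
Lemma zeroE k : (0 : ps) k = 0.
Proof. by []. Qed.
Lemma oneE k : (1 : ps) k = if k == 0%N then 1 else 0.
Proof. by []. Qed.
Lemma pmulE (f g : pser R) : pmul f g = ((f : ps) * (g : ps)).
Proof. by []. Qed.
Lemma psubE (f g : pser R) : psub f g = ((f : ps) - (g : ps)).
Proof. by []. Qed.


Lemma sumE I (r : seq I) (P : pred I) (F : I -> ps) k :
  (\sum_(i <- r | P i) F i) k = \sum_(i <- r | P i) F i k.
Proof.
elim/big_rec2: _ => // i y1 y2 _ <-; by [].
Qed.

Lemma tauD n (x y : ps) : tau n (x + y) = (tau n x : ps) + (tau n y : ps).
Proof. by apply: pE. Qed.
Lemma tauN n (x : ps) : tau n (- x) = - (tau n x : ps).
Proof. by apply: pE. Qed.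
Lemma tauB n (x y : ps) : tau n (x - y) = (tau n x : ps) - (tau n y : ps).
Proof. by apply: pE. Qed.
Lemma alphaB n (x y : ps) : alpha n (x - y) = (alpha n x : ps) - (alpha n y : ps).
Proof. apply: pE => k; rewrite /alpha !subE; case: ifP => //; by rewrite subr0. Qed.

Section Rp.
Variable a : R -> Prop.
Hypothesis Ha : is_ideal a.

Lemma a0 : a 0. Proof. by case: Ha. Qed.
Lemma aD x y : a x -> a y -> a (x+y). Proof. by case: Ha => _ h _; apply: h. Qed.
Lemma aM r x : a x -> a (r*x). Proof. by case: Ha => _ _ h; apply: h. Qed.

Lemma rpow0 k : rpow a k 0.
Proof. case: k => [|k]; [exact: ipow_0|exact: ipow_zero]. Qed.
Lemma rpowD k x y : rpow a k x -> rpow a k y -> rpow a k (x+y).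
Proof. case: k => [|k] hx hy; [exact: ipow_0| exact: ipow_add]. Qed.
Lemma rpowMl k r x : rpow a k x -> rpow a k (r * x).
Proof.
move=> h; elim: h r => {k x} [x|k|k x y ax hy IH|k u v _ IHu _ IHv] r.
- exact: ipow_0.
- by rewrite mulr0; exact: ipow_zero.
- rewrite mulrA; apply: ipow_mul => //; exact: aM ax.
- rewrite mulrDr. apply: ipow_add; [exact: IHu|exact: IHv].
Qed.
Lemma rpowMr k r x : rpow a k x -> rpow a k (x * r).
Proof. by rewrite mulrC; apply: rpowMl. Qed.
Lemma rpowN k x : rpow a k x -> rpow a k (- x).
Proof. by rewrite -mulN1r; apply: rpowMl. Qed.
Lemma rpowB k x y : rpow a k x -> rpow a k y -> rpow a k (x - y).
Proof. by move=> hx hy; apply: rpowD => //; apply: rpowN. Qed.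
Lemma rpow_pred k x : rpow a k x -> rpow a k.-1 x.
Proof.
move=> h; elim: h => {k x} [x|k|k x y ax hy IH|k u v _ IHu _ IHv] /=.
- exact: ipow_0.
- exact: rpow0.
- exact: rpowMl.
- apply: rpowD; [exact: IHu|exact: IHv].
Qed.
Lemma rpow_le k m x : (k <= m)%N -> rpow a m x -> rpow a k x.
Proof.
elim: m => [|m IH] hkm h.
  by move: hkm; rewrite leqn0 => /eqP ->.
move: hkm; rewrite leq_eqVlt => /orP [/eqP -> //|hk].
by apply: IH => //; exact: (rpow_pred h).
Qed.
Lemma rpow_mul i j x y : rpow a i x -> rpow a j y -> rpow a (i+j) (x*y).
Proof.
move=> hx; elim: hx y => {i x} [x|k|k x z ax hz IH|k u v _ IHu _ IHv] y hy.
- rewrite add0n; exact: rpowMl.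
- rewrite mul0r; exact: rpow0.
- rewrite -mulrA addSn; apply: ipow_mul => //; exact: IH.
- rewrite mulrDl; apply: rpowD; [exact: IHu|exact: IHv].
Qed.
Lemma rpow1 x : a x -> rpow a 1 x.
Proof. move=> ax; rewrite -(mulr1 x); apply: ipow_mul => //; exact: ipow_0. Qed.
Lemma rpowX m x : a x -> rpow a m (x ^+ m).
Proof.
move=> ax; elim: m => [|m IH]; first exact: ipow_0.
by rewrite exprS; apply: ipow_mul.
Qed.
Lemma rpow_sum k I (r : seq I) (P : pred I) (F : I -> R) :
  (forall i, P i -> rpow a k (F i)) -> rpow a k (\sum_(i <- r | P i) F i).
Proof. move=> h; apply: big_ind => //; [exact: rpow0|exact: rpowD]. Qed.

Definition Ak k (h : ps) := forall j, rpow a (k - j) (h j).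
Definition aser i (h : ps) := forall j, rpow a i (h j).

Lemma Ak0 k : Ak k 0. Proof. move=> j; exact: rpow0. Qed.
Lemma AkD k x y : Ak k x -> Ak k y -> Ak k (x + y).
Proof. by move=> hx hy j; apply: rpowD. Qed.
Lemma AkN k x : Ak k x -> Ak k (- x).
Proof. by move=> hx j; apply: rpowN. Qed.
Lemma AkB k x y : Ak k x -> Ak k y -> Ak k (x - y).
Proof. by move=> hx hy j; apply: rpowB. Qed.
Lemma Ak_le k m h : (k <= m)%N -> Ak m h -> Ak k h.
Proof. by move=> hkm h' j; apply: (rpow_le _ (h' j)); apply: leq_sub2r. Qed.
Lemma AkMl k h u : Ak k h -> Ak k (u * h).
Proof.
move=> hh j; rewrite mulE; apply: rpow_sum => i _; apply: rpowMl.
apply: (rpow_le _ (hh _)); rewrite leq_sub2l // leq_subr //.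
Qed.
Lemma AkMr k h u : Ak k h -> Ak k (h * u).
Proof. by rewrite mulrC; apply: AkMl. Qed.
Lemma AkM i j x y : Ak i x -> Ak j y -> Ak (i+j) (x*y).
Proof.
move=> hx hy l; rewrite mulE; apply: rpow_sum => m _.
apply: (rpow_le _ (rpow_mul (hx m) (hy _))).
have := ltn_ord m; lia.
Qed.
Lemma Ak_sum k I (r : seq I) (P : pred I) (F : I -> ps) :
  (forall i, P i -> Ak k (F i)) -> Ak k (\sum_(i <- r | P i) F i).
Proof. move=> h; apply: big_ind => //; [exact: Ak0|exact: AkD]. Qed.
Lemma aser_Ak k h : aser k h -> Ak k h.
Proof. by move=> hh j; apply: (rpow_le _ (hh j)); apply: leq_subr. Qed.
Lemma aserM i j x y : aser i x -> aser j y -> aser (i+j) (x*y).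
Proof.
move=> hx hy l; rewrite mulE; apply: rpow_sum => m _.
exact: rpow_mul.
Qed.
Lemma aser0 h : aser 0 h. Proof. move=> j; exact: ipow_0. Qed.
Lemma Ak_tau n k h : Ak k h -> Ak (k - n) (tau n h).
Proof. by move=> hh j; rewrite /tau -subnDA; apply: hh. Qed.
Lemma aser_tau n k h : aser k h -> aser k (tau n h).
Proof. by move=> hh j; apply: hh. Qed.
Lemma Ak_alpha n k h : Ak k h -> Ak k (alpha n h).
Proof. by move=> hh j; rewrite /alpha; case: ifP => _; [apply: hh|apply: rpow0]. Qed.

Lemma Apow_Ak k (h : ps) : Apow a k h -> Ak k h.
Proof.
elim => {k h} [x|k|k x y ax hy IH|k u v _ IHu _ IHv] j.
- exact: ipow_0.
- exact: rpow0.
- change (rpow a (k.+1 - j) (((x : ps) * (y : ps)) j)); rewrite mulE big_ord_recl.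
  apply: rpowD.
    rewrite subn0; apply: (rpow_le _ (rpow_mul (rpow1 ax) (IH j))); lia.
  apply: rpow_sum => i _; apply: rpowMl; apply: (rpow_le _ (IH _)).
  case: i => i hi /=; rewrite /bump /=. lia.
- apply: rpowD; [exact: IHu|exact: IHv].
Qed.

Lemma bump0 i : bump 0 i = i.+1.
Proof. by rewrite /bump leq0n add1n. Qed.

Definition cst (c : R) : ps := fun k => if k == 0%N then c else 0.
Definition pX : ps := fun k => if k == 1%N then 1 else 0.

Lemma cst_Apow m c : rpow a m c -> Apow a m (cst c).
Proof.
elim => {m c} [x|k|k x y ax hy IH|k u v _ IHu _ IHv].
- exact: ipow_0.
- have -> : cst 0 = pzero R by apply: pE => i; rewrite /cst /pzero; case: ifP.
  exact: ipow_zero.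
- have -> : cst (x * y) = pmul (cst x) (cst y).
    apply: pE => i; rewrite pmulE mulE; case: i => [|i].
      by rewrite big_ord_recl big_ord0 addr0.
    rewrite /cst /=; apply/esym/big1 => l _; case: l => [[|l] hl] /=.
      by rewrite mulr0.
    by rewrite mul0r.
  exact: ipow_mul.
- have -> : cst (u + v) = padd (cst u) (cst v).
    by apply: pE => i; rewrite /cst /padd; case: ifP; rewrite ?addr0.
  exact: ipow_add.
Qed.

Lemma Ak_Apow k (h : ps) : Ak k h -> Apow a k h.
Proof.
elim: k h => [|k IH] h hh; first exact: ipow_0.
pose sh : ps := fun j => h j.+1.
have -> : h = padd (cst (h 0%N)) (pmul pX sh).
  apply: pE => j; rewrite /padd pmulE mulE /cst; case: j => [|j].
    by rewrite big_ord_recl big_ord0 /pX /= mul0r !addr0.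
  rewrite big_ord_recl big_ord_recl /= !bump0 big1 => [|i _]; last by rewrite /pX /= mul0r.
  by rewrite /pX /= mul0r mul1r !add0r addr0 subSS subn0.
rewrite /Apow; apply: ipow_add.
  by apply: cst_Apow; have := hh 0%N; rewrite subn0.
apply: ipow_mul; first by rewrite /bigA /pX /=; exact: a0.
by apply: IH => j; have := hh j.+1; rewrite subSS.
Qed.

Lemma rmodP Pi i r : rep_system a (Pi i) i ->
  Pi i (rmod a Pi i r) /\ rpow a i (r - rmod a Pi i r).
Proof.
move=> hr; rewrite /rmod.
apply: (epsilon_spec (inhabits 0) (fun p => Pi i p /\ rpow a i (r - p))).
by have [p [? ? _]] := hr r; exists p.
Qed.

Lemma pmodA_err Pi k (h : ps) : (forall i, (i <= k)%N -> rep_system a (Pi i) i) ->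
  Ak k (h - (pmodA a Pi k h : ps)).
Proof.
move=> hr j; rewrite subE /pmodA; case: ifP => hj.
  by case: (rmodP (h j) (hr (k - j)%N (leq_subr _ _))).
by rewrite (_ : k - j = 0)%N; [exact: ipow_0|lia].
Qed.

Lemma rpow1_a x : rpow a 1 x -> a x.
Proof.
move=> h; have : forall k y, rpow a k y -> k = 1%N -> a y.
  move=> k y; elim => {k y} [y|k|k x' y ax _ _|k u v _ IHu _ IHv] //.
  - move=> _; exact: a0.
  - by move=> _; rewrite mulrC; apply: aM.
  - by move=> e; apply: aD; [exact: IHu|exact: IHv].
by move/(_ 1%N x h erefl).
Qed.

Lemma tau_mul n (h p : ps) :
  tau n (h * p) = (tau n (h * (alpha n p : ps)) : ps) + h * (tau n p : ps).
Proof.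
apply: pE => j; rewrite addE /tau !mulE.
rewrite (big_ord_widen (n + j).+1 (fun i => h i * p (n + (j - i))%N)); last first.
  by rewrite ltnS leq_addl.
rewrite [X in _ + X]big_mkcond -big_split /=; apply: eq_bigr => i _.
have hi := ltn_ord i.
rewrite /alpha; case: ifP => h1; case: ifP => h2.
- exfalso; move: h1 h2; lia.
- by rewrite addr0.
- by rewrite mulr0 add0r addnBA //; move: h2; lia.
- exfalso; move: h1 h2 hi; lia.
Qed.

Lemma iterB (L : ps -> ps) (LB : forall x y, L (x - y) = L x - L y) k x y :
  iter k L (x - y) = iter k L x - iter k L y.
Proof. by elim: k => //= k ->; exact: LB. Qed.

Lemma neumann (L : ps -> ps) (LB : forall x y, L (x - y) = L x - L y) c Z :
  Z = c - L Z -> forall K,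
  Z = \sum_(i < K) (-1) ^+ i * iter i L c + (-1) ^+ K * iter K L Z.
Proof.
move=> hZ; elim=> [|K IH]; first by rewrite big_ord0 add0r mul1r.
rewrite big_ord_recr /= {1}IH -addrA; congr (_ + _).
have e : iter K L Z = iter K L c - iter K.+1 L Z by rewrite {1}hZ iterB // iterSr.
by rewrite [in LHS]e mulrBr exprS mulN1r mulNr.
Qed.

Lemma unit_1m (F : nat -> R -> Prop) : is_filtration a F -> complete_wrt F ->
  forall x, a x -> exists r, (1 - x) * r = 1.
Proof.
case=> Fid _ Fa [Cinj Csurj] x ax.
pose kk i := epsilon (inhabits 0%N) (fun k => forall y, rpow a k y -> F i y).
have kkP i : forall y, rpow a (kk i) y -> F i y.
  exact: (epsilon_spec (inhabits 0%N) (fun k => forall y, rpow a k y -> F i y) (Fa i)).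
pose ka i := (\sum_(0 <= l < i.+1) kk l)%N.
have kle i : (kk i <= ka i)%N by rewrite /ka big_nat_recr //= leq_addl.
have kmono i j : (i <= j)%N -> (ka i <= ka j)%N.
  move=> hij; rewrite /ka (@big_cat_nat _ _ _ i.+1 0 j.+1) //= ?leq_addr //.
have F0 i : F i 0 by case: (Fid i).
have FD i u v : F i u -> F i v -> F i (u + v) by case: (Fid i) => _ h _; apply: h.
have FM i r u : F i u -> F i (r * u) by case: (Fid i) => _ _ h; apply: h.
pose y i := \sum_(0 <= m < ka i) x ^+ m.
have Fx i m : (ka i <= m)%N -> F i (x ^+ m).
  move=> hm; apply: kkP; apply: (rpow_le _ (rpowX m ax)).
  exact: leq_trans (kle i) hm.
have hy : forall i j, (i <= j)%N -> F i (y j - y i).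
  move=> i j hij; rewrite /y [X in X - _](@big_cat_nat _ _ _ (ka i)) //= ?kmono //.
  rewrite addrAC subrr add0r big_nat_cond.
  apply: big_ind => [|u v|m /andP[/andP[hm _] _]]; [exact: F0|exact: FD|exact: Fx].
have [r0 hr0] := Csurj y hy.
exists r0; apply/eqP; rewrite -subr_eq0; apply/eqP; apply: Cinj => i.
have e1 : (1 - x) * y i = 1 - x ^+ ka i.
  rewrite /y big_mkord -[1 - x]opprB mulNr -subrX1 opprB //.
have -> : (1 - x) * r0 - 1 = (1 - x) * (r0 - y i) + - x ^+ ka i.
  by rewrite mulrBr e1; ring.
apply: FD; first exact: FM.
by rewrite -mulN1r; apply: FM; apply: Fx.
Qed.

Lemma dpow_zero (d : ps) : d 0%N = 0 -> forall i j, (j < i)%N -> (d ^+ i) j = 0.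
Proof.
move=> d0; elim=> [|i IH] j //; rewrite exprS mulE => hj.
apply: big1 => l _; case: l => [[|l] hl] /=.
  by rewrite d0 mul0r.
by rewrite IH ?mulr0 //; move: hl hj; lia.
Qed.

Lemma ps_unit (p : ps) r : p 0%N * r = 1 -> exists q : ps, p * q = 1.
Proof.
move=> hp.
pose p' := cst r * p.
have p'0 : p' 0%N = 1 by rewrite /p' mulE big_ord_recl big_ord0 addr0 /cst /= mulrC.
pose d := 1 - p'.
have d0 : d 0%N = 0 by rewrite /d subE p'0 oneE subrr.
pose q : ps := fun k => (\sum_(i < k.+1) d ^+ i) k.
have qK : forall K k, (k < K)%N -> (\sum_(i < K) d ^+ i) k = q k.
  elim=> [|K IH] k // hk.
  case: (ltngtP k K) => hkK.
  - rewrite big_ord_recr; transitivity ((\sum_(i < K) d ^+ i) k + (d ^+ K) k) => //.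
    by rewrite IH // dpow_zero // addr0.
  - by move: hk hkK; lia.
  - by rewrite hkK.
have hq : p' * q = 1.
  apply: pE => k.
  have -> : (p' * q) k = (p' * \sum_(i < k.+1) d ^+ i) k.
    rewrite !mulE; apply: eq_bigr => i _; rewrite qK //; exact: leq_subr.
  have -> : p' = 1 - d by rewrite /d opprB addrC subrK.
  have -> : (1 - d) * \sum_(i < k.+1) d ^+ i = 1 - d ^+ k.+1.
    by rewrite -opprB mulNr -subrX1 opprB.
  by rewrite subE (dpow_zero d0) ?subr0.
exists (cst r * q); rewrite mulrA (mulrC p); exact: hq.
Qed.

Lemma signE i (h : ps) k : (((-1) ^+ i : ps) * h) k = (-1) ^+ i * h k.
Proof.
elim: i h => [|i IH] h; first by rewrite !expr0 !mul1r.
rewrite !exprS -!mulrA [in LHS]mulN1r.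
transitivity (- ((((-1) ^+ i : ps) * h) k)); first by [].
by rewrite IH mulN1r.
Qed.

Lemma arith1 n N i : (i < N)%N -> (N <= n.+1 * N - n * i.+1)%N.
Proof.
move=> hi; have : (n * i.+1 <= n * N)%N by rewrite leq_mul2l hi orbT.
rewrite mulSn; lia.
Qed.

Lemma monic_tau n (P : ps) : P n = 1 -> (forall i, (n < i)%N -> P i = 0) -> (tau n P : ps) = 1.
Proof.
move=> h1 h0; apply: pE => j; rewrite /tau oneE; case: j => [|j] /=.
  by rewrite addn0.
by rewrite h0 //; lia.
Qed.

Lemma alpha_aser n (P : ps) : (forall i, (i < n)%N -> a (P i)) -> aser 1 (alpha n P).
Proof.
move=> h j; rewrite /alpha; case: ifP => hj; [exact: rpow1 (h _ hj)|exact: rpow0].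
Qed.

Section Main.
Variables (F : nat -> R -> Prop) (n N : nat) (f g Pf Uf Pg Ug : ps).
Hypotheses (hF : is_filtration a F) (hC : complete_wrt F) (hN : (0 < N)%N).
Hypotheses (dga : forall i, (i < n)%N -> a (g i)).
Hypotheses (Pfn : Pf n = 1) (Pfz : forall i, (n < i)%N -> Pf i = 0)
  (Pfa : forall i, (i < n)%N -> a (Pf i)).
Hypotheses (Pgn : Pg n = 1) (Pgz : forall i, (n < i)%N -> Pg i = 0)
  (Pga : forall i, (i < n)%N -> a (Pg i)).
Hypotheses (hUf : exists v : ps, Uf * v = 1) (hUg : exists v : ps, Ug * v = 1).
Hypotheses (ef : f = Uf * Pf) (eg : g = Ug * Pg).
Hypothesis hfg : Ak (n.+1 * N) (f - g).

Lemma part1 : Ak N.+1 (Pf - Pg) /\ Ak N (Uf - Ug).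
Proof.
have [vg hvg] := hUg.
pose M := (n.+1 * N)%N.
pose E := vg * (f - g).
have hE : Ak M E by apply: AkMl.
have vgg : vg * g = Pg by rewrite eg mulrA (mulrC vg) hvg mul1r.
pose Z := vg * Uf - 1.
have hZP : Z * Pf = E + Pg - Pf.
  by rewrite /Z /E mulrBl mul1r -mulrA -ef mulrBr vgg subrK.
pose beta : ps := alpha n Pf.
pose L1 := fun h : ps => (tau n (h * beta) : ps).
have L1B : forall x y, L1 (x - y) = L1 x - L1 y by move=> x y; rewrite /L1 mulrBl tauB.
have hZ : Z = (tau n E : ps) - L1 Z.
  have := tau_mul n Z Pf; rewrite (monic_tau Pfn Pfz) mulr1 hZP -addrA tauD tauB.
  by rewrite (monic_tau Pfn Pfz) (monic_tau Pgn Pgz) subrr addr0 => ->; rewrite /L1 /beta addrAC subrr add0r.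
have hb : aser 1 beta by apply: alpha_aser.
have bnd : forall i, Ak (M - n - n * i) (iter i L1 (tau n E)).
  elim=> [|i IH] /=; first by rewrite muln0 subn0; apply: Ak_tau.
  rewrite /L1; apply: (Ak_le _ (Ak_tau n (AkMr beta IH))); rewrite mulnS; lia.
have asr : forall i h, aser i (iter i L1 h).
  elim=> [|i IH] h /=; first exact: aser0.
  rewrite /L1 -addn1; apply: aser_tau; exact: aserM.
have hZN : Ak N Z.
  rewrite (neumann L1B hZ N); apply: AkD.
    apply: Ak_sum => i _; apply: AkMl; apply: (Ak_le _ (bnd i)).
    have := arith1 n (ltn_ord i); rewrite mulnS; lia.
  by apply: AkMl; apply: aser_Ak.
have UfUg : Uf - Ug = Ug * Z.
  by rewrite /Z mulrBr mulr1 mulrA hvg mul1r.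
split; last by rewrite UfUg; apply: AkMl.
have eP : Pf - Pg = alpha n (E - Z * Pf).
  rewrite hZP (_ : E - (E + Pg - Pf) = Pf - Pg); last by ring.
  apply: pE => j; rewrite /alpha; case: ifP => // hj.
  rewrite subE; case: (ltngtP n j) => hnj; first by rewrite Pfz // Pgz // subrr.
    by move: hj hnj; lia.
  by rewrite -hnj Pfn Pgn subrr.
rewrite eP.
case: (posnP n) => hn.
  by move=> j; rewrite /alpha hn; apply: rpow0.
apply: Ak_alpha; apply: AkB.
  apply: (Ak_le _ hE); rewrite /M mulSn.
  have : (0 < n * N)%N by rewrite muln_gt0 hn hN.
  lia.
rewrite -addn1; apply: AkM => //.
move=> j; case: j => [|j]; first by rewrite subn0; apply: rpow1; apply: Pfa.
by rewrite (_ : 1 - j.+1 = 0)%N //; exact: ipow_0.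
Qed.

Lemma part2 (Pi : nat -> R -> Prop) :
  (forall i, (i <= n.+1 * N)%N -> rep_system a (Pi i) i) ->
  let t := pmodA a Pi (n.+1 * N - n) (pinv (tau n g)) in
  let s := altsum N (Sseq a Pi n N g t) in
  Ak N ((pinv Uf : ps) - (t : ps) * (s : ps)) /\ Ak N (Pf - (g * (t : ps)) * (s : ps)).
Proof.
move=> hPi t s.
have [vg hvg] := hUg.
have [hPP hUU] := part1.
pose M := (n.+1 * N)%N.
pose T : ps := tau n g.
pose al : ps := alpha n g.
have hal : aser 1 al by apply: alpha_aser.
have vgg : vg * g = Pg by rewrite eg mulrA (mulrC vg) hvg mul1r.
pose e : ps := tau n (vg * al).
have h1 : e + vg * T = 1.
  by rewrite -(monic_tau Pgn Pgz) -vgg tau_mul.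
have hvT : vg * T = 1 - e by rewrite -h1 addrAC subrr add0r.
have he : aser 1 e.
  by apply: aser_tau; have := aserM (aser0 vg) hal; rewrite add0n.
have [r hr] := unit_1m hF hC (rpow1_a (he 0%N)).
have [q hq] : exists q : ps, (1 - e) * q = 1.
  apply: (@ps_unit _ r); have -> : (1 - e) 0%N = 1 - e 0%N by [].
  exact: hr.
have Tunit : exists v, pmul T v = pone R.
  exists (vg * q); change (T * (vg * q) = 1).
  by rewrite mulrA (mulrC T) hvT hq.
pose u : ps := pinv (tau n g).
have hu : T * u = 1.
  exact: (epsilon_spec (inhabits (pzero R)) (fun v => pmul T v = pone R) Tunit).
pose W : ps := 1 - e.
have vgW : vg = W * u by rewrite /W -hvT -mulrA hu mulr1.
pose w : ps := u * al.
pose L := fun h : ps => (tau n (w * h) : ps).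
have LB : forall x y, L (x - y) = L x - L y by move=> x y; rewrite /L mulrBr tauB.
have hW : W = 1 - L W.
  rewrite {1}/W /e vgW /L /w; by rewrite -mulrA mulrC.
have hw : aser 1 w by have := aserM (aser0 u) hal; rewrite add0n.
have asr : forall i h, aser i (iter i L h).
  elim=> [|i IH] h /=; first exact: aser0.
  rewrite /L -add1n; apply: aser_tau; exact: aserM.
have ht : Ak (M - n) (u - (t : ps)).
  apply: pmodA_err => i hi; apply: hPi; exact: leq_trans hi (leq_subr _ _).
pose S := Sseq a Pi n N g t.
have hS : forall i, (i < N)%N -> Ak (M - n * i.+1) ((S i : ps) - iter i L 1).
  elim=> [|i IH] hi.
    have -> : (S 0%N : ps) = 1 by [].
    by rewrite /= subrr; apply: Ak0.
  have IH' := IH (ltnW hi).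
  pose B : ps := tau n ((t : ps) * al * S i).
  pose C : ps := L (S i).
  have h1' : Ak (M - n * i.+2) ((S i.+1 : ps) - B).
    have -> : (S i.+1 : ps) = pmodA a Pi (M - n * i.+2) B by [].
    rewrite -opprB; apply: AkN; apply: pmodA_err => j hj; apply: hPi.
    exact: leq_trans hj (leq_subr _ _).
  have h2 : Ak (M - n * i.+2) (B - C).
    have -> : B - C = tau n ((al * S i) * ((t : ps) - u)).
      have E2 : ((t : ps) * al * S i) - (u * al * S i) = (al * S i) * ((t : ps) - u) by ring.
      by rewrite /B /C /L /w -tauB E2.
    apply: (Ak_le _ (Ak_tau n (AkMl _ (_ : Ak (M - n) ((t : ps) - u))))).
      rewrite !mulnS; lia.
    by rewrite -opprB; apply: AkN.
  have h3 : Ak (M - n * i.+2) (C - L (iter i L 1)).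
    rewrite /C -LB; apply: (Ak_le _ (Ak_tau n (AkMl w IH'))).
    rewrite (mulnS n i.+1); lia.
  have -> : (S i.+1 : ps) - iter i.+1 L 1
      = ((S i.+1 : ps) - B) + (B - C) + (C - L (iter i L 1)) by rewrite /=; ring.
  by apply: AkD; [apply: AkD|].
have hs : (s : ps) = \sum_(i < N) (-1) ^+ i * (S i : ps).
  apply: pE => k; rewrite sumE; apply: eq_bigr => i _; by rewrite signE.
have hWs : Ak N (W - (s : ps)).
  have -> : W - (s : ps) = \sum_(i < N) (-1) ^+ i * (iter i L 1 - (S i : ps))
                    + (-1) ^+ N * iter N L W.
    rewrite hs {1}(neumann LB hW N) addrAC; congr (_ + _).
    by rewrite -sumrB; apply: eq_bigr => i _; rewrite mulrBr.
  apply: AkD; last by apply: AkMl; apply: aser_Ak.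
  apply: Ak_sum => i _; apply: AkMl; rewrite -opprB; apply: AkN.
  apply: (Ak_le _ (hS i (ltn_ord i))); exact: arith1 (ltn_ord i).
pose V : ps := pinv Uf.
have hV : Uf * V = 1.
  exact: (epsilon_spec (inhabits (pzero R)) (fun v => pmul Uf v = pone R) hUf).
have hNM : (N <= M - n)%N by have := arith1 n hN; rewrite muln1.
have hVts : Ak N (V - (t : ps) * (s : ps)).
  have e1 : V * vg * (Ug - Uf) = V - vg.
    have -> : V * vg * (Ug - Uf) = V * (Ug * vg) - vg * (Uf * V) by ring.
    by rewrite hvg hV !mulr1.
  have e2 : u * (W - (s : ps)) + (u - (t : ps)) * (s : ps) = vg - (t : ps) * (s : ps) by rewrite vgW; ring.
  have -> : V - (t : ps) * (s : ps) = V * vg * (Ug - Uf) + (u * (W - (s : ps)) + (u - (t : ps)) * (s : ps)).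
    by rewrite e1 e2 addrA subrK.
  apply: AkD; first by apply: AkMl; rewrite -opprB; apply: AkN.
  apply: AkD; first exact: AkMl.
  by apply: AkMr; apply: (Ak_le hNM).
split => //.
have e3 : V * (f - g) + g * (V - (t : ps) * (s : ps)) = Pf - g * (t : ps) * (s : ps).
  have -> : V * (f - g) + g * (V - (t : ps) * (s : ps)) = (Uf * V) * Pf - g * (t : ps) * (s : ps).
    by rewrite ef; ring.
  by rewrite hV mul1r.
rewrite -e3; apply: AkD; apply: AkMl => //.
by apply: (Ak_le _ hfg); rewrite leq_pmull.
Qed.

End Main.
End Rp.
End PS.

Theorem proposition5p1 (R : comPzRingType) (a : R -> Prop)
  (F : nat -> R -> Prop) (n N : nat) (f g Pf Uf Pg Ug : pser R) :
  is_ideal a -> is_filtration a F -> complete_wrt F ->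
  (1 <= N)%N ->
  distinguished a n f -> distinguished a n g ->
  weierstrass a n f Pf Uf -> weierstrass a n g Pg Ug ->
  pcong a (n.+1 * N) f g ->
  (pcong a N.+1 Pf Pg /\ pcong a N Uf Ug) /\
  (forall Pi : nat -> R -> Prop,
     (forall i, (i <= n.+1 * N)%N -> rep_system a (Pi i) i) ->
     g = pmodA a Pi (n.+1 * N) f ->
     let t := pmodA a Pi (n.+1 * N - n) (pinv (tau n g)) in
     let s := altsum N (Sseq a Pi n N g t) in
     pcong a N (pinv Uf) (pmul t s) /\ pcong a N Pf (pmul (pmul g t) s)).
Proof.
move=> Ha hF hC hN [dfa _] [dga _] [Pfn Pfz Pfa hUf ef] [Pgn Pgz Pga hUg eg] hfg.
have hfg' : Ak a (n.+1 * N) ((f : ps R) - (g : ps R)) by apply: Apow_Ak.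
have [hPP hUU] := @part1 R a Ha n N f g Pf Uf Pg Ug hN Pfn Pfz Pfa Pgn Pgz hUg ef eg hfg'.
split; first by split; apply: Ak_Apow.
move=> Pi hPi _ t s.
have [h1 h2] := @part2 R a Ha F n N f g Pf Uf Pg Ug hF hC hN dga Pfn Pfz Pfa Pgn Pgz
  hUf hUg ef eg hfg' Pi hPi.
by split; apply: Ak_Apow.
Qed.
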